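(* Let $X_1, \dots, X_n$ be nonnegative random variables on a probability space $(\Omega, \mathcal{F}, \mathbb{P})$, let $\emptyset \neq \mathcal{S} \subseteq \{1, \dots, n\}$, and let $\mathbf{u} = (u_\lambda : \emptyset \neq \lambda \subseteq \mathcal{S})$ be real thresholds satisfying $u_\mu \geq u_\lambda$ for all nonempty $\mu \subsetneq \lambda \subseteq \mathcal{S}$. Then the collection $\{ B_\mu(\mathbf{u}) : \mu \subseteq \mathcal{S} \}$ forms a partition of $\Omega$ (the events are pairwise disjoint and their union is $\Omega$).
   Context: For $\mu \subseteq \mathcal{S}$ and $u \in \mathbb{R}$, $A_\mu(u) := \bigcap_{i \in \mu} \{X_i > u\}$, with $A_\emptyset(u) := \Omega$. For $\mu \subseteq \mathcal{S}$ (including $\mu = \emptyset$), $B_\mu(\mathbf{u}) := A_\mu(u_\mu) \cap \bigcap_{\mu \subsetneq \lambda \subseteq \mathcal{S}} \overline{A_\lambda(u_\lambda)}$, where $\overline{E}$ denotes the complement of an event $E$; in particular $B_\emptyset(\mathbf{u}) = \bigcap_{\emptyset \neq \lambda \subseteq \mathcal{S}} \overline{A_\lambda(u_\lambda)}$. *)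

(* Defs.v *)
From HB Require Import structures.
From mathcomp Require Import all_boot all_order all_algebra.
From mathcomp Require Import all_classical all_reals all_analysis.
Set Implicit Arguments. Unset Strict Implicit. Unset Printing Implicit Defensive.
Import Order.TTheory GRing.Theory Num.Theory.
Local Open Scope classical_set_scope.
Local Open Scope ring_scope.

Definition A_ev (T : Type) (R : realType) (n : nat) (X : 'I_n -> T -> R)
  (mu : {set 'I_n}) (t : R) : set T :=
  [set w | forall i, i \in mu -> t < X i w].

Definition B_ev (T : Type) (R : realType) (n : nat) (X : 'I_n -> T -> R)
  (S : {set 'I_n}) (u : {set 'I_n} -> R) (mu : {set 'I_n}) : set T :=
  A_ev X mu (u mu) `&`
  \bigcap_(lam in [set lam : {set 'I_n} | (mu \proper lam) && (lam \subset S)])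
     ~` A_ev X lam (u lam).

(* Main.v *)
Require Import Defs.
From HB Require Import structures.
From mathcomp Require Import all_boot all_order all_algebra.
From mathcomp Require Import all_classical all_reals all_analysis.
From mathcomp Require Import zify.
Import Order.TTheory GRing.Theory Num.Theory.
Local Open Scope classical_set_scope.
Local Open Scope ring_scope.

Lemma B_evP (T : Type) (R : realType) (n : nat) (X : 'I_n -> T -> R)
  (S : {set 'I_n}) (u : {set 'I_n} -> R) (mu : {set 'I_n}) w :
  B_ev X S u mu w <-> (A_ev X mu (u mu) w /\
    forall lam : {set 'I_n}, mu \proper lam -> lam \subset S -> ~ A_ev X lam (u lam) w).
Proof.
split.
- case=> HA HB; split => // lam H1 H2; apply: (HB lam) => /=; by rewrite H1 H2.
- case=> HA HB; split => // lam /= /andP[H1 H2]; exact: HB.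
Qed.

Theorem lemma16 (d : measure_display) (T : measurableType d) (R : realType)
  (P : probability T R) (n : nat) (X : 'I_n -> T -> R)
  (hXmeas : forall i, measurable_fun setT (X i))
  (hXnn : forall i w, 0 <= X i w)
  (S : {set 'I_n}) (hS : S != finset.set0)
  (u : {set 'I_n} -> R)
  (hu : forall mu lam : {set 'I_n}, mu != finset.set0 -> mu \proper lam ->
        lam \subset S -> u lam <= u mu) :
  (forall mu nu : {set 'I_n}, mu \subset S -> nu \subset S -> mu != nu ->
      B_ev X S u mu `&` B_ev X S u nu = set0) /\
  \bigcup_(mu in [set mu : {set 'I_n} | mu \subset S]) B_ev X S u mu = setT.
Proof.
split.
- move=> mu nu muS nuS munu; apply/seteqP; split => // w [/B_evP [Amu Bmu] /B_evP [Anu Bnu]].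
  case: (boolP (nu \subset mu)) => [num|nnum].
    by apply: (Bnu mu _ muS Amu); rewrite finset.properEneq eq_sym munu.
  case: (boolP (mu \subset nu)) => [mun|nmun].
    by apply: (Bmu nu _ nuS Anu); rewrite finset.properEneq munu.
  have p1 : mu \proper mu :|: nu by apply: finset.properUl.
  have p2 : nu \proper mu :|: nu by apply: finset.properUr.
  have LS : mu :|: nu \subset S by rewrite finset.subUset muS nuS.
  apply: (Bmu _ p1 LS) => i; rewrite finset.in_setU => /orP [] Hi.
    have mu0 : mu != finset.set0 by apply/set0Pn; exists i.
    exact: (le_lt_trans (hu _ _ mu0 p1 LS) (Amu i Hi)).
  have nu0 : nu != finset.set0 by apply/set0Pn; exists i.
  exact: (le_lt_trans (hu _ _ nu0 p2 LS) (Anu i Hi)).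
- apply/seteqP; split => // w _.
  suff H : forall k (mu : {set 'I_n}), (#|S| - #|mu| < k)%N -> mu \subset S ->
      A_ev X mu (u mu) w ->
      exists2 nu : {set 'I_n}, nu \subset S & B_ev X S u nu w.
    have A0 : A_ev X finset.set0 (u finset.set0) w by move=> i; rewrite finset.in_set0.
    have [nu nuS Bnu] := H (#|S|.+1) finset.set0 (leq_ltn_trans (leq_subr _ _) (ltnSn _))
      (finset.sub0set _) A0.
    by exists nu.
  elim=> [//|k IH] mu gap muS Amu.
  have [ex|nex] := pselect (exists lam : {set 'I_n}, [/\ mu \proper lam, lam \subset S & A_ev X lam (u lam) w]).
    case: ex => lam [pl lS Al]; apply: (IH lam) => //.
    have c1 := proper_card pl; have c2 := subset_leq_card lS.
    lia.
  exists mu => //; apply/B_evP; split => // lam pl lS Al.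
  by apply: nex; exists lam.
Qed.
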